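(* Let $H$ be a forest and $S\subseteq V(H)$ such that every leaf of $H$ lies in $S$ and every connected component of $H$ has at least two vertices. Then there is a set $F^*\subseteq V(H)$ with $|F^*\cap S|\ge \frac12|S|$ such that every connected component of $H[F^*]$ is a quasi-$S$-clean subdivided star.
   Context: All graphs are finite and simple. A subdivided star is a graph with at least two vertices obtained from a star $K_{1,m}$ ($m\ge1$) by replacing its edges with paths of arbitrary positive length; in particular every path with at least two vertices is a subdivided star. If a subdivided star has a vertex of degree at least 3, that vertex is its center. A subdivided star $T$ is quasi-$S$-clean if every leaf of $T$ lies in $S$ and $V(T)\cap S$ consists of the leaves of $T$ plus possibly one further vertex, which in case $T$ has a vertex of degree at least 3 must be that center vertex (when $T$ is a path, the further vertex may be any single internal vertex). *)

(* Defs.v *)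
(* A finite simple graph is a symmetric irreflexive relation
   e : rel T on a finType T. *)
From mathcomp Require Import all_boot.
Set Implicit Arguments. Unset Strict Implicit. Unset Printing Implicit Defensive.

Section Graphs.
Variable T : finType.

Definition erestr (e : rel T) (A : {set T}) : rel T :=
  [rel x y | [&& e x y, x \in A & y \in A]].

Definition has_cycle (e : rel T) : Prop :=
  exists p : seq T, [/\ 3 <= size p, uniq p & cycle e p].

Definition forest (e : rel T) : Prop := ~ has_cycle e.

Definition deg (e : rel T) (x : T) : nat := #|[set y | e x y]|.

Definition deg_in (e : rel T) (A : {set T}) (x : T) : nat := deg (erestr e A) x.

Definition leaf (e : rel T) (x : T) : bool := deg e x == 1.

Definition gcomp (e : rel T) (x : T) : {set T} := [set y | connect e x y].

Definition is_component_of_induced (e : rel T) (F C : {set T}) : Prop :=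
  exists2 x, x \in F & C = gcomp (erestr e F) x.

Definition is_tree_on (e : rel T) (C : {set T}) : Prop :=
  (forall x y, x \in C -> y \in C -> connect (erestr e C) x y) /\
  forest (erestr e C).

(* G[C] is a subdivided star: a tree with at least two vertices having a
   vertex c (the centre of the star K_{1,m} before subdivision) such that every
   other vertex has degree at most 2. *)
Definition subdivided_star (e : rel T) (C : {set T}) : Prop :=
  [/\ 2 <= #|C|, is_tree_on e C &
      exists2 c, c \in C & forall x, x \in C -> x != c -> deg_in e C x <= 2].

(* G[C] is quasi-S-clean: every leaf lies in S, and V(T) ∩ S consists of the
   leaves plus possibly one further vertex, which must be the centre (vertex of
   degree >= 3) when there is one (when G[C] is a path any single internal
   vertex is allowed; non-leaves of a tree with >= 2 vertices are internal). *)
Definition quasi_clean (e : rel T) (S C : {set T}) : Prop :=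
  [/\ (forall x, x \in C -> deg_in e C x = 1 -> x \in S),
      #|[set x in C :&: S | deg_in e C x != 1]| <= 1 &
      forall x, x \in C -> x \in S -> deg_in e C x != 1 ->
        (exists2 c, c \in C & 3 <= deg_in e C c) -> 3 <= deg_in e C x].

End Graphs.

(* Main.v *)
Require Import Defs.
From mathcomp Require Import all_boot zify.
From Stdlib Require Import Classical.
Set Implicit Arguments. Unset Strict Implicit. Unset Printing Implicit Defensive.

Section Main.
Variable T : finType.
Variable e : rel T.
Variable S : {set T}.
Hypothesis esym : symmetric e.
Hypothesis eirr : irreflexive e.
Hypothesis efor : forest e.

Lemma ctrans (E : rel T) (x y z : T) : connect E x y -> connect E y z -> connect E x z.
Proof. exact: connect_trans. Qed.

Lemma comp_step (E : rel T) c y z : y \in gcomp E c -> E y z -> z \in gcomp E c.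
Proof. rewrite !inE => H Hyz; exact: ctrans H (connect1 Hyz). Qed.

Definition nbr (X : {set T}) x := [set y in X | e x y].

Lemma nbrE (X : {set T}) x y : (y \in nbr X x) = (y \in X) && e x y.
Proof. by rewrite inE. Qed.

Lemma deg_in_nbr (X : {set T}) (x : T) : x \in X -> deg_in e X x = #|nbr X x|.
Proof.
move=> xX; rewrite /deg_in /deg; apply: eq_card => y.
by rewrite !inE /erestr /= xX /= andbC.
Qed.

Lemma erestr_sym (X : {set T}) : symmetric (erestr e X).
Proof. by move=> x y; rewrite /erestr /= esym; case: (x \in X); case: (y \in X). Qed.

Lemma conn_sym (X : {set T}) : connect_sym (erestr e X).
Proof. exact: sym_connect_sym (erestr_sym X). Qed.

Lemma path_restr_mem (X : {set T}) x (s : seq T) : path (erestr e X) x s -> {subset s <= X}.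
Proof.
elim: s x => [|y s IH] x //= /andP [/and3P [_ _ yX] Hp] z.
by rewrite inE => /orP [/eqP -> // | /(IH _ Hp)].
Qed.

Lemma path_restr_head (X : {set T}) x (s : seq T) : path (erestr e X) x s -> s != [::] -> x \in X.
Proof. by case: s => [|y s] //= /andP [/and3P []]. Qed.

Lemma comp_sub (X : {set T}) (c y : T) : y \in gcomp (erestr e X) c -> y = c \/ y \in X.
Proof.
rewrite inE => /connectP [p Hp ->]; case: (lastP p) Hp => [|q z] Hp; first by left.
right; apply: (path_restr_mem Hp); by rewrite last_rcons mem_rcons mem_head.
Qed.

Lemma restr_mono (X Y : {set T}) (x y : T) : X \subset Y -> connect (erestr e X) x y -> connect (erestr e Y) x y.
Proof.
move=> XY; apply: connect_sub => a b /and3P [eab aX bX]; apply: connect1.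
by rewrite /erestr /= eab (subsetP XY _ aX) (subsetP XY _ bX).
Qed.

Lemma path_restr (X Y : {set T}) x (s : seq T) : path (erestr e X) x s -> {subset x :: s <= Y} -> path (erestr e Y) x s.
Proof.
elim: s x => [|y s IH] x //= /andP [/and3P [exy _ _] Hp] sub.
rewrite {1}/erestr /= exy sub ?mem_head // sub ?inE ?eqxx ?orbT //=.
by apply: IH => // z zin; apply: sub; rewrite inE zin orbT.
Qed.

Lemma path_e (X : {set T}) x (s : seq T) : path (erestr e X) x s -> path e x s.
Proof. by apply: sub_path => a b /and3P []. Qed.

Lemma forest_sub (X : {set T}) : forest (erestr e X).
Proof.
move=> [p [Hs Hu Hc]]; apply: efor; exists p; split => //.
case: p Hs Hu Hc => [|x p] //= _ _; exact: path_e.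
Qed.

Lemma L2 (A : {set T}) (x y z : T) : e x y -> e x z -> y != z -> ~~ connect (erestr e (A :\ x)) y z.
Proof.
move=> exy exz yz; apply/negP => /connectP [p Hp Hl].
case: (shortenP Hp) Hl => p' Hp' Hu _ Hl.
have p'n : p' != [::] by case: p' Hp' Hu Hl => //= _ _ Hl; rewrite Hl eqxx in yz.
apply: efor; exists (x :: y :: p'); split.
- by case: p' p'n {Hp' Hu Hl}.
- rewrite cons_uniq Hu andbT; apply/negP => xin.
  have yA : y \in A :\ x by apply: path_restr_head Hp' p'n.
  move: xin; rewrite inE => /orP [/eqP xy | xp]; first by rewrite -xy !inE eqxx in yA.
  by have := path_restr_mem Hp' xp; rewrite !inE eqxx.
- rewrite /= exy /= rcons_path (path_e Hp') /= -Hl esym //.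
Qed.


Lemma comp_conn (X : {set T}) (c y : T) : y \in gcomp (erestr e X) c -> connect (erestr e (gcomp (erestr e X) c)) c y.
Proof.
rewrite inE => /connectP [p Hp ->]; apply/connectP; exists p => //.
apply: (path_restr Hp) => z /(path_connect Hp) Hz; by rewrite inE.
Qed.

Lemma connect_closed (E : rel T) (X : {set T}) :
  (forall a b, a \in X -> E a b -> b \in X) -> forall x y, x \in X -> connect E x y -> y \in X.
Proof.
move=> cl x y xX /connectP [p Hp ->]; elim: p x xX Hp => [|z p IH] x xX //=.
move=> /andP [exz Hq]; exact: IH (cl _ _ xX exz) Hq.
Qed.

Definition good (C : {set T}) := subdivided_star e C /\ quasi_clean e S C.
Definition valid (F : {set T}) :=
  forall C, is_component_of_induced e F C -> good C.

Lemma valid0 : valid set0.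
Proof. by move=> C [x]; rewrite inE. Qed.

Lemma valid_add (F P : {set T}) (c : T) : valid F -> c \in P ->
  (forall y, y \in P -> connect (erestr e P) c y) -> good P ->
  (forall x y, x \in F -> y \in P -> e x y -> False) -> valid (F :|: P).
Proof.
move=> vF cP Pc gP noe C [x]; rewrite inE => /orP [xF | xP] ->.
- have -> : gcomp (erestr e (F :|: P)) x = gcomp (erestr e F) x.
    apply/setP => y; rewrite [in RHS]inE; apply/idP/idP.
    + rewrite inE => H; suff : y \in gcomp (erestr e F) x by rewrite inE.
      apply: (@connect_closed (erestr e (F :|: P)) (gcomp (erestr e F) x) _ x y _ H);
        last by rewrite inE connect0.
      move=> a b aX /and3P [eab aFP bFP].
      have aF : a \in F by case: (comp_sub aX) => [->|].
      rewrite inE in bFP; case/orP: bFP => [bF | bP]; last by case: (noe _ _ aF bP eab).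
      rewrite inE in aX; rewrite inE; apply: ctrans aX (connect1 _).
      by rewrite /erestr /= eab aF bF.
    + by rewrite inE; apply: restr_mono; rewrite subsetUl.
  by apply: vF; exists x.
- have -> : gcomp (erestr e (F :|: P)) x = P => //.
  apply/setP => y; rewrite inE; apply/idP/idP.
  + move=> H; apply: (@connect_closed (erestr e (F :|: P)) P _ x y xP H).
    move=> a b aP /and3P [eab _ bFP].
    rewrite inE in bFP; case/orP: bFP => // bF.
    by case: (noe _ _ bF aP); rewrite esym.
  + move=> yP; apply: (@restr_mono P); first by rewrite subsetUr.
    apply: ctrans (Pc _ yP); by rewrite conn_sym Pc.
Qed.

Lemma piece_ok (P : {set T}) (c : T) : c \in P ->
  (forall y, y \in P -> connect (erestr e P) c y) ->
  (forall v, v \in P -> v != c -> (#|nbr P v| = 1 /\ v \in S) \/ (#|nbr P v| = 2 /\ v \notin S)) ->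
  0 < #|nbr P c| -> (#|nbr P c| = 1 -> c \in S) -> good P.
Proof.
move=> cP Pc Hv c0 c1.
have Hd : forall v, v \in P -> v != c -> deg_in e P v <= 2.
  by move=> v vP vc; rewrite deg_in_nbr //; case: (Hv v vP vc) => [[-> _]|[-> _]].
split; [split|split].
- case/card_gt0P: c0 => y; rewrite inE => /andP [yP ecy].
  apply/card_gt1P; exists c, y; split => //.
  by apply/eqP => cy; rewrite cy eirr in ecy.
- split; last exact: forest_sub.
  move=> x y xP yP; apply: ctrans (Pc _ yP); by rewrite conn_sym Pc.
- by exists c.
- move=> x xP; rewrite deg_in_nbr //; case: (eqVneq x c) => [-> // | xc].
  by case: (Hv x xP xc) => [[_ ->] | [->]].
- apply: (@leq_trans #|[set c]|); last by rewrite cards1.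
  apply: subset_leq_card; apply/subsetP => x.
  rewrite !inE => /andP [/andP [xP xS] xd]; apply/negPn/negP => xc.
  rewrite deg_in_nbr // in xd.
  by case: (Hv x xP xc) => [[xd1 _] | [_ nS]]; [move: xd; rewrite xd1 | move: nS; rewrite xS].
- move=> x xP xS xd [c' c'P c'd].
  have xc : x = c.
    apply/eqP/negPn/negP => xc; rewrite deg_in_nbr // in xd.
    by case: (Hv x xP xc) => [[xd1 _] | [_ nS]]; [move: xd; rewrite xd1 | move: nS; rewrite xS].
  have c'c : c' = c.
    apply/eqP/negPn/negP => c'c; have := Hd c' c'P c'c.
    by rewrite leqNgt (leq_trans _ c'd).
  by rewrite xc -c'c.
Qed.


Definition clean (A : {set T}) :=
  forall x, x \in A -> 0 < #|nbr A x| /\ (#|nbr A x| = 1 -> x \in S).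

Definition strong (A : {set T}) : pred T :=
  fun x => (2 < #|nbr A x|) || ((x \in S) && (1 < #|nbr A x|)).

Lemma nonstrong_clean (A : {set T}) x : clean A -> x \in A -> ~~ strong A x ->
  (#|nbr A x| = 1 /\ x \in S) \/ (#|nbr A x| = 2 /\ x \notin S).
Proof.
move=> cA xA; case: (cA x xA); rewrite /strong.
case: #|nbr A x| => [|[|[|n]]] //=; first by move=> _ H; left; split => //; apply: H.
by rewrite andbT => _ _ ->; right.
Qed.

Definition res (A : {set T}) := exists F1 F2 : {set T},
  [/\ F1 \subset A, F2 \subset A, [disjoint F1 & F2], valid F1 /\ valid F2 &
      #|A :&: S| <= #|F1 :&: S| + #|F2 :&: S|].

Lemma disjP (X Y : {set T}) : reflect (forall x, x \in X -> x \in Y -> False) [disjoint X & Y].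
Proof.
rewrite disjoint_subset; apply: (iffP subsetP) => H x xX.
  by move=> xY; move: (H x xX); rewrite inE xY.
by rewrite inE; apply/negP => xY; apply: (H x xX xY).
Qed.

Lemma cardsU_dis (X Y : {set T}) : [disjoint X & Y] -> #|X :|: Y| = #|X| + #|Y|.
Proof. by move=> d; rewrite cardsU; move: d; rewrite -setI_eq0 => /eqP ->; rewrite cards0 subn0. Qed.

Lemma combine (A P A' : {set T}) (a c : T) : P \subset A -> A' \subset A :\: P ->
  A :&: S \subset P :|: A' -> c \in P -> (forall y, y \in P -> connect (erestr e P) c y) ->
  good P -> (forall z y, z \in A' -> y \in P -> e z y -> z = a) -> res A' -> res A.
Proof.
move=> PA A'A AS cP Pc gP att [F1 [F2 [F1A F2A dis [v1 v2] cnt]]].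
have A'A2 : A' \subset A by apply: subset_trans A'A (subsetDl _ _).
have A'P : [disjoint A' & P].
  by apply/disjP => x /(subsetP A'A); rewrite inE => /andP [/negP].
have noe : forall F : {set T}, F \subset A' -> a \notin F -> forall x y, x \in F -> y \in P -> e x y -> False.
  move=> F FA aF x y xF yP exy; have := att x y (subsetP FA _ xF) yP exy.
  by move=> xa; rewrite -xa xF in aF.
have FP : forall F : {set T}, F \subset A' -> [disjoint F & P].
  move=> F FA; apply/disjP => x xF xP.
  by move: A'P => /disjP /(_ x (subsetP FA _ xF) xP).
have cS : #|A :&: S| <= #|P :&: S| + #|A' :&: S|.
  apply: (@leq_trans #|(P :&: S) :|: (A' :&: S)|); last by apply: leq_card_setU.
  apply: subset_leq_card; apply/subsetP => x; rewrite !inE => /andP [xA xS].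
  have : x \in P :|: A' by apply: (subsetP AS); rewrite inE xA xS.
  by rewrite inE xS => /orP [-> | ->]; rewrite ?orbT.
have PS : forall F : {set T}, F \subset A' -> #|(F :|: P) :&: S| = #|F :&: S| + #|P :&: S|.
  move=> F FA; rewrite setIUl cardsU_dis //.
  apply/disjP => x; rewrite !inE => /andP [xF _] /andP [xP _].
  by move: (FP F FA) => /disjP /(_ x xF xP).
case: (boolP (a \in F1)) => aF1.
- have aF2 : a \notin F2 by apply/negP => aF2; move: dis => /disjP /(_ a aF1 aF2).
  exists F1, (F2 :|: P); split.
  + exact: subset_trans F1A A'A2.
  + by rewrite subUset PA (subset_trans F2A A'A2).
  + apply/disjP => x xF1; rewrite inE => /orP [xF2 | xP].
    * by move: dis => /disjP /(_ x xF1 xF2).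
    * by move: (FP F1 F1A) => /disjP /(_ x xF1 xP).
  + split; first exact: v1.
    exact: valid_add v2 cP Pc gP (noe F2 F2A aF2).
  + rewrite PS //; move: cS cnt; lia.
- exists (F1 :|: P), F2; split.
  + by rewrite subUset PA (subset_trans F1A A'A2).
  + exact: subset_trans F2A A'A2.
  + apply/disjP => x; rewrite inE => /orP [xF1 | xP] xF2.
    * by move: dis => /disjP /(_ x xF1 xF2).
    * by move: (FP F2 F2A) => /disjP /(_ x xF2 xP).
  + split; last exact: v2.
    exact: valid_add v1 cP Pc gP (noe F1 F1A aF1).
  + rewrite PS //; move: cS cnt; lia.
Qed.

Lemma comp_case (A : {set T}) (c : T) : clean A -> c \in A ->
  (forall v, v \in gcomp (erestr e A) c -> v != c -> ~~ strong A v) ->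
  (forall A' : {set T}, #|A'| < #|A| -> clean A' -> res A') -> res A.
Proof.
move=> cA cAin Hns IH; set C := gcomp (erestr e A) c.
have cC : c \in C by rewrite inE connect0.
have CA : C \subset A by apply/subsetP => v /comp_sub [->|].
have nbrC : forall v, v \in C -> nbr C v = nbr A v.
  move=> v vC; apply/setP => y; rewrite !nbrE; apply/andP/andP => [[yC eyv]|[yA evy]].
    by split => //; apply: (subsetP CA).
  split => //; apply: (comp_step vC).
  by rewrite /erestr /= evy yA (subsetP CA _ vC).
have noe : forall z y, z \in A :\: C -> y \in C -> e z y -> False.
  move=> z y; rewrite inE => /andP [zC zA] yC ezy; move/negP: zC; apply.
  apply: (comp_step yC).
  by rewrite /erestr /= esym ezy zA (subsetP CA _ yC).
apply: (@combine A C (A :\: C) c c) => //.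
- by apply/subsetP => x; rewrite !inE => /andP [xA _]; rewrite xA andbT; case: (connect _ c x).
- exact: comp_conn.
- apply: (piece_ok cC (fun y yC => comp_conn yC)).
  + move=> v vC vc; rewrite nbrC //; apply: nonstrong_clean => //.
      exact: (subsetP CA).
    exact: Hns.
  + by rewrite nbrC //; case: (cA c cAin).
  + by rewrite nbrC //; case: (cA c cAin).
- by move=> z y zA yC ezy; case: (noe z y zA yC ezy).
- apply: IH.
  + rewrite -(cardsID C A) -addn1 addnC leq_add2r card_gt0; apply/set0Pn; exists c.
    by rewrite in_setI cAin cC.
  + move=> z zA'; have -> : nbr (A :\: C) z = nbr A z.
      apply/setP => y; rewrite !nbrE in_setD; apply/andP/andP => [[/andP [_ yA] ezy] | [yA ezy]] //.
      split => //; rewrite yA andbT; apply/negP => yC.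
      exact: noe z y zA' yC ezy.
    by apply: cA; move: zA'; rewrite in_setD => /andP [].
Qed.


Definition gp (A : {set T}) (x : T) (s : seq T) :=
  [&& x \in A, uniq (x :: s) & path (erestr e A) x s].

Lemma gp_mem (A : {set T}) x s : gp A x s -> {subset x :: s <= A}.
Proof.
case/and3P => xA _ Hp z; rewrite inE => /orP [/eqP -> // | zs].
exact: (path_restr_mem Hp zs).
Qed.

Lemma path_to (X : {set T}) (v c : T) : connect (erestr e X) v c ->
  exists q, [/\ path (erestr e X) v q, uniq (v :: q) & last v q = c].
Proof.
move=> /connectP [p Hp ->]; case: (shortenP Hp) => q Hq Hu _; by exists q.
Qed.

Lemma count_two (a : pred T) v q c : a v -> a c -> c != v -> last v q = c -> 1 < count a (v :: q).
Proof.
move=> av ac cv lq /=; rewrite av add1n ltnS -has_count; apply/hasP; exists c => //.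
have : c \in v :: q by rewrite -lq mem_last.
by rewrite inE (negbTE cv).
Qed.

Lemma split_has (a : pred T) s : has a s ->
  exists L x r, [/\ s = L ++ x :: r, ~~ has a L & a x].
Proof.
elim: s => [|y s IH] //=; case: (boolP (a y)) => ay /=.
  by move=> _; exists [::], y, s.
move=> /IH [L [x [r [-> hL ax]]]]; exists (y :: L), x, r; split => //=.
by rewrite negb_or ay.
Qed.

Lemma exmax (P : nat -> Prop) n0 b : P n0 -> (forall n, P n -> n <= b) ->
  exists m, P m /\ forall n, P n -> n <= m.
Proof.
move=> Pn0 Hb; move: {2}(b - n0) (leqnn (b - n0)) => k.
elim: k n0 Pn0 => [|k IH] n0 Pn0 Hk.
  exists n0; split => // n Pn; have := Hb n Pn; move: Hk; lia.
case: (classic (exists n, P n /\ n0 < n)) => [[n [Pn lt]] | nex].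
  apply: (IH n Pn); have := Hb n Pn; move: Hk lt; lia.
exists n0; split => // n Pn; rewrite leqNgt; apply/negP => lt; apply: nex; by exists n.
Qed.


Lemma path_suffix (E : rel T) x s L y r : path E x s -> x :: s = L ++ y :: r -> path E y r.
Proof.
case: L => [|z L] /= Hp [Ex Es]; first by rewrite -Es -Ex.
by move: Hp; rewrite Es cat_path => /andP [_] /= /andP [].
Qed.

Lemma count0 (a : pred T) s : ~~ has a s -> count a s = 0.
Proof. by rewrite has_count -leqNgt leqn0 => /eqP. Qed.

Lemma eq_sym_neq (a b : T) : a != b -> b != a.
Proof. by rewrite eq_sym. Qed.

Lemma mem_split_ex (s : seq T) x : x \in s -> exists s1 s2, s = s1 ++ x :: s2.
Proof.
elim: s => [|y s IH] //; rewrite inE => /orP [/eqP -> | /IH [s1 [s2 ->]]].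
  by exists [::], s.
by exists (y :: s1), s2.
Qed.

Lemma strong_ge2 (A : {set T}) x : strong A x -> 1 < #|nbr A x|.
Proof. by rewrite /strong => /orP [/ltnW // | /andP []]. Qed.

Lemma strong_le2 (A : {set T}) x : strong A x -> #|nbr A x| <= 2 -> x \in S.
Proof. by rewrite /strong => /orP [lt | /andP [] //] le; move: le; rewrite leqNgt lt. Qed.

Lemma chain_nbr (A : {set T}) xj D xm r2 d : uniq (xj :: D ++ xm :: r2) ->
  path (erestr e A) xj (D ++ xm :: r2) -> ~~ has (strong A) D -> d \in D ->
  d \notin S /\ (forall z, z \in A -> e d z -> [|| z == xj, z \in D | z == xm]).
Proof.
move=> u p hD dD.
have nsd : ~~ strong A d by apply: (hasPn hD).
have [D1 [D2 ED]] := mem_split_ex dD.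
rewrite ED -catA cat_cons in u p.
move: p; rewrite cat_path => /andP [_] /= /andP [/and3P [ead lA dA]].
move=> pd.
have edb : erestr e A d (head xm D2) by case: (D2) pd => [|b D2'] /= /andP [].
move: edb => /and3P [edb _ bA].
move: u; rewrite -cat_cons cat_uniq => /and3P [_ hh _].
have ab : last xj D1 != head xm D2.
  apply/negP => /eqP ab; move/hasPn: hh => /(_ (head xm D2)).
  have -> : head xm D2 \in d :: D2 ++ xm :: r2 by case: (D2) => [|b D2'] /=; rewrite !inE eqxx ?orbT.
  by rewrite -ab mem_last => /(_ isT).
have sub : [set last xj D1; head xm D2] \subset nbr A d.
  apply/subsetP => z; rewrite !inE => /orP [/eqP -> | /eqP ->]; rewrite ?edb ?bA //.
  by rewrite lA esym ead.
have le2 : #|nbr A d| <= 2.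
  by move: nsd; rewrite /strong negb_or -leqNgt => /andP [].
have Enb : nbr A d = [set last xj D1; head xm D2].
  apply/eqP; rewrite eq_sym eqEcard sub cards2 ab; exact: le2.
have ge2 : 1 < #|nbr A d| by rewrite Enb cards2 ab.
split.
  by apply/negP => dS; move: nsd; rewrite /strong dS ge2 orbT.
move=> z zA edz; have : z \in nbr A d by rewrite nbrE zA edz.
rewrite Enb !inE ED => /orP [/eqP -> | /eqP ->].
  have := mem_last xj D1; rewrite inE => /orP [-> // | l1].
  by rewrite mem_cat l1 orbT.
case: (D2) => [|b D2'] /=; first by rewrite eqxx !orbT.
by rewrite mem_cat !inE eqxx !orbT.
Qed.

Lemma arith1 (a b : nat) : 1 < a -> a <= b + 1 -> 0 < b.
Proof. lia. Qed.

Lemma caseB (A : {set T}) x s L xj r D xm r2 :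
  clean A -> gp A x s ->
  (forall y t, gp A y t -> count (strong A) (y :: t) <= count (strong A) (x :: s)) ->
  x :: s = L ++ xj :: r -> ~~ has (strong A) L -> strong A xj ->
  r = D ++ xm :: r2 -> ~~ has (strong A) D -> strong A xm ->
  (forall A' : {set T}, #|A'| < #|A| -> clean A' -> res A') -> res A.
Proof.
move=> cA gps mx Es hL sxj Er hD sxm IH.
have memA := gp_mem gps.
have uxr : uniq (xj :: r).
  by case/and3P: gps => _ u _; move: u; rewrite Es cat_uniq => /and3P [].
have pxr : path (erestr e A) xj r by case/and3P: gps => _ _ p; exact: path_suffix p Es.
have cnt_s : count (strong A) (x :: s) = 1 + count (strong A) r.
  by rewrite Es count_cat count0 //= sxj.
have rA : {subset xj :: r <= A}.
  by move=> z zin; apply: memA; rewrite Es mem_cat zin orbT.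
have xjA : xj \in A by apply: rA; rewrite mem_head.
pose y1 := head xm D.
have Er1 : r = y1 :: behead (D ++ xm :: r2) by rewrite Er /y1; case: (D).
have ey1 : e xj y1 by move: pxr; rewrite Er1 /= => /andP [/and3P []].
have xjy1 : xj != y1 by move: uxr; rewrite Er1 /= inE negb_or => /andP [/andP []].
pose P := gcomp (erestr e (A :\ y1)) xj.
have xjP : xj \in P by rewrite inE connect0.
have PA1 : P \subset A :\ y1.
  apply/subsetP => z /comp_sub [->|//]; by rewrite in_setD1 xjA andbT.
have PA : P \subset A by apply: subset_trans PA1 (subsetDl _ _).
have P1 : forall y, y \in r -> y \notin P.
  move=> y; rewrite Er1 inE => /orP [/eqP -> | ].
    by apply/negP => /(subsetP PA1); rewrite in_setD1 eqxx.
  have uxr1 := uxr; have pxr1 := pxr; rewrite Er1 in uxr1 pxr1.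
  move: uxr1 pxr1; case: (behead (D ++ xm :: r2)) => [|y2 r''] //= uxr1 pxr1 yr'.
  move: pxr1 => /andP [_ /andP [/and3P [ey12 _ y2A] pr'']].
  have y1nin : y1 \notin y2 :: r'' by move: uxr1 => /andP [_ /andP []].
  have y2r : {subset y2 :: r'' <= A :\ y1}.
    move=> z zin; rewrite in_setD1; apply/andP; split.
      by apply/negP => /eqP zy1; move: y1nin; rewrite -zy1 zin.
    move: zin; rewrite inE => /orP [/eqP -> // | zr].
    exact: (path_restr_mem pr'' zr).
  have cy2 : connect (erestr e (A :\ y1)) y2 y.
    apply: (path_connect (path_restr pr'' y2r)); exact: yr'.
  apply/negP => yP; rewrite inE in yP.
  have cxy2 : connect (erestr e (A :\ y1)) xj y2 by apply: ctrans yP _; rewrite conn_sym.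
  have xjy2 : xj != y2.
    by move: uxr1; rewrite !inE negb_or => /and3P [/andP [_ /norP [/negP xy2 _]] _ _]; apply/negP.
  have ey1x : e y1 xj by rewrite esym.
  by move: (L2 A ey1x ey12 xjy2); rewrite cxy2.
have P2 : forall v, v \in P -> v != xj -> ~~ strong A v.
  move=> v vP vxj; apply/negP => sv.
  have cvx : connect (erestr e (A :\ y1)) v xj by rewrite conn_sym -[connect _ _ _]inE.
  have [q [pq uq lq]] := path_to cvx.
  have qP : {subset v :: q <= P}.
    move=> z zin; have cvz := path_connect pq zin.
    have := vP; rewrite !inE => cxv; exact: ctrans cxv cvz.
  have gnew : gp A v (q ++ r).
    apply/and3P; split.
    - exact: (subsetP PA).
    - rewrite -cat_cons cat_uniq uq /=; apply/andP; split; last by case/andP: uxr.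
      apply/hasPn => z zr; apply/negP => zq.
      by move: (P1 z zr); rewrite (qP z zq).
    - rewrite cat_path lq pxr andbT.
      apply: (path_restr pq) => z /qP zP; exact: (subsetP PA).
  have := mx _ _ gnew; rewrite -cat_cons count_cat cnt_s.
  have := count_two sv sxj (eq_sym_neq vxj) lq => H1 H2; move: H2; rewrite leq_add2r => H2.
  by rewrite leqNgt H1 in H2.
have P3 : forall v, v \in P -> v != xj -> nbr P v = nbr A v.
  move=> v vP vxj; apply/setP => y; rewrite !nbrE; apply/andP/andP => [[yP evy] | [yA evy]].
    by split => //; apply: (subsetP PA).
  split => //; have yy1 : y != y1.
    apply/negP => /eqP yy1; rewrite yy1 in evy.
    have ey1x : e y1 xj by rewrite esym.
    have ey1v : e y1 v by rewrite esym.
    have := L2 A ey1x ey1v (eq_sym_neq vxj).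
    by rewrite -[connect _ _ _]inE vP.
  apply: (comp_step vP); rewrite /erestr /= evy (subsetP PA1 _ vP) /=.
  by rewrite in_setD1 yy1 yA.
have P4 : #|nbr A xj| <= #|nbr P xj| + 1.
  apply: (@leq_trans #|nbr P xj :|: [set y1]|); last first.
    by apply: leq_trans (leq_card_setU _ _) _; rewrite cards1.
  apply: subset_leq_card; apply/subsetP => y; rewrite nbrE => /andP [yA exy].
  rewrite in_setU in_set1; case: (eqVneq y y1) => [-> | yy1]; first by rewrite orbT.
  rewrite nbrE exy andbT; apply/orP; left; apply: (comp_step xjP).
  by rewrite /erestr /= exy (subsetP PA1 _ xjP) in_setD1 yy1 yA.
have gP : good P.
  apply: (piece_ok xjP (fun y yP => comp_conn yP)).
  - move=> v vP vxj; rewrite P3 //; apply: nonstrong_clean => //.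
      exact: (subsetP PA).
    exact: P2.
  - exact: arith1 (strong_ge2 sxj) P4.
  - move=> H1; apply: (strong_le2 sxj); move: P4; rewrite H1 => //.
have uD : uniq (xj :: D ++ xm :: r2) by rewrite -Er.
have pD : path (erestr e A) xj (D ++ xm :: r2) by rewrite -Er.
have NB := chain_nbr uD pD hD.
have xmr : xm \in r by rewrite Er mem_cat mem_head orbT.
have xmP : xm \notin P := P1 xm xmr.
have xmD : xm \notin D.
  have := uD; rewrite cons_uniq cat_uniq => /andP [_ /and3P [_ /hasPn H _]].
  exact: H xm (mem_head _ _).
have DP : forall z, z \in D -> z \notin P.
  by move=> z zD; apply: P1; rewrite Er mem_cat zD.
have DA : forall z, z \in D -> z \in A.
  by move=> z zD; apply: rA; rewrite inE Er mem_cat zD orbT.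
pose R := P :|: [set z | z \in D].
pose A' := A :\: R.
have inR : forall z, (z \in R) = (z \in P) || (z \in D) by move=> z; rewrite !inE.
have xjR : xj \in R by rewrite inR xjP.
have y1R : (y1 \in R) || (y1 == xm).
  by rewrite inR /y1; case: (D) => [|d D'] /=; rewrite ?eqxx ?orbT ?inE ?eqxx ?orbT.
have inA' : forall z, (z \in A') = (z \notin R) && (z \in A) by move=> z; rewrite in_setD.
have Rconn : forall z, z \in R -> connect (erestr e (A :\ xm)) xj z.
  move=> z; rewrite inR => /orP [zP | zD].
    apply: (@restr_mono P); last exact: comp_conn.
    apply/subsetP => w wP; rewrite in_setD1 (subsetP PA _ wP) andbT.
    by apply/negP => /eqP wxm; move: xmP; rewrite -wxm wP.
  have pD' : path (erestr e A) xj D by move: pD; rewrite cat_path => /andP [].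
  have pD2 : path (erestr e (A :\ xm)) xj D.
    apply: (path_restr pD') => w; rewrite inE => /orP [/eqP -> | wD].
      rewrite in_setD1 xjA andbT; apply/negP => /eqP xjxm.
      by move: uD => /andP [+ _]; rewrite xjxm mem_cat mem_head orbT.
    rewrite in_setD1 DA // andbT; apply/negP => /eqP wxm.
    by move: xmD; rewrite -wxm wD.
  by apply: (path_connect pD2); rewrite inE zD orbT.
have R3 : #|nbr A xm :&: R| <= 1.
  apply/card_le1_eqP => y y'; rewrite !in_setI !nbrE.
  move=> /andP [/andP [yA exy] yR] /andP [/andP [y'A exy'] y'R].
  apply/eqP/negPn/negP => yy'.
  have := L2 A exy' exy yy'; rewrite (ctrans _ (Rconn _ yR)) //.
  by rewrite conn_sym; apply: Rconn.
have cA' : clean A'.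
  move=> z; rewrite inA' => /andP [zR zA].
  case: (eqVneq z xm) => [-> | zxm].
    have le : #|nbr A xm| <= #|nbr A' xm| + 1.
      apply: (@leq_trans #|nbr A' xm :|: (nbr A xm :&: R)|); last first.
        by apply: leq_trans (leq_card_setU _ _) _; rewrite leq_add2l.
      apply: subset_leq_card; apply/subsetP => y yn; rewrite in_setU in_setI yn /=.
      case: (boolP (y \in R)) => yR; first by rewrite orbT.
      by move: yn; rewrite !nbrE inA' yR orbF.
    split; first exact: arith1 (strong_ge2 sxm) le.
    move=> H1; apply: (strong_le2 sxm); move: le; rewrite H1 => //.
  have -> : nbr A' z = nbr A z.
    apply/setP => y; rewrite !nbrE inA'; apply/andP/andP => [[/andP [_ yA] ezy] | [yA ezy]] //.
    split => //; rewrite yA andbT inR negb_or; apply/andP; split.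
      apply/negP => yP.
      have zy1 : z != y1.
        apply/negP => /eqP zy1; move: y1R; rewrite -zy1 (negbTE zR) /=.
        by rewrite (negbTE zxm).
      move: zR; rewrite inR negb_or => /andP [/negP zP _]; apply: zP.
      apply: (comp_step yP); rewrite /erestr /= esym ezy (subsetP PA1 _ yP).
      by rewrite in_setD1 zy1 zA.
    apply/negP => yD; have [_ H] := NB y yD.
    have eyz : e y z by rewrite esym.
    move: (H z zA eyz) zR; rewrite inR (negbTE zxm) orbF => /orP [/eqP -> | ->].
      by rewrite xjP.
    by rewrite orbT.
  exact: cA.
apply: (@combine A P A' y1 xj) => //.
- apply/subsetP => z; rewrite inA' inR in_setD negb_or => /andP [/andP [zP _] zA].
  by rewrite zP zA.
- apply/subsetP => z; rewrite in_setI => /andP [zA zS].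
  rewrite in_setU inA' zA andbT inR.
  case: (boolP (z \in P)) => //= zP; case: (boolP (z \in D)) => //= zD.
  by have [/negP] := NB z zD.
- exact: comp_conn.
- move=> z y; rewrite inA' => /andP [zR zA] yP ezy.
  apply/eqP/negPn/negP => zy1; move: zR; rewrite inR negb_or => /andP [/negP zP _].
  apply: zP; apply: (comp_step yP); rewrite /erestr /= esym ezy (subsetP PA1 _ yP).
  by rewrite in_setD1 zy1 zA.
- apply: IH => //.
  rewrite /A' -(cardsID R A) -addn1 addnC leq_add2r card_gt0; apply/set0Pn; exists xj.
  by rewrite in_setI xjA xjR.
Qed.


Lemma claim n : forall A : {set T}, #|A| <= n -> clean A -> res A.
Proof.
elim: n => [|n IH] A An cA.
  have -> : A = set0 by apply/eqP; rewrite -cards_eq0 -leqn0.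
  exists set0, set0; split; rewrite ?sub0set //; last by rewrite set0I cards0.
    by apply/disjP => x; rewrite inE.
  by split; apply: valid0.
have IH' : forall A' : {set T}, #|A'| < #|A| -> clean A' -> res A'.
  by move=> A' lt; apply: IH; rewrite -ltnS; apply: leq_trans lt An.
case: (set_0Vmem A) => [A0 | [x0 x0A]].
  exists set0, set0; split; rewrite ?sub0set //; last by rewrite A0 set0I cards0.
    by apply/disjP => x; rewrite inE.
  by split; apply: valid0.
pose Pm := fun m => exists x s, gp A x s /\ count (strong A) (x :: s) = m.
have P0 : Pm (count (strong A) [:: x0]) by exists x0, [::]; split => //; rewrite /gp x0A.
have Pb : forall m, Pm m -> m <= #|T|.
  move=> m [x [s [/and3P [_ u _] <-]]]; apply: leq_trans (count_size _ _) _.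
  by rewrite -(card_uniqP u) max_card.
have [m [[x [s [gps cm]]] mx0]] := exmax P0 Pb.
have mx : forall y t, gp A y t -> count (strong A) (y :: t) <= count (strong A) (x :: s).
  by move=> y t gyt; rewrite cm; apply: mx0; exists y, t.
have memA := gp_mem gps.
case: (boolP (has (strong A) (x :: s))) => hs.
- have [L [xj [r [Es hL sxj]]]] := split_has hs.
  have xjA : xj \in A by apply: memA; rewrite Es mem_cat mem_head orbT.
  case: (boolP (has (strong A) r)) => hr.
  + have [D [xm [r2 [Er hD sxm]]]] := split_has hr.
    exact: (caseB cA gps mx Es hL sxj Er hD sxm IH').
  + apply: (comp_case cA xjA) IH' => v vC vxj; apply/negP => sv.
    have cvx : connect (erestr e A) v xj by rewrite conn_sym -[connect _ _ _]inE.
    have [q [pq uq lq]] := path_to cvx.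
    have vA : v \in A by case: (comp_sub vC) => [vx|//]; rewrite vx eqxx in vxj.
    have gq : gp A v q by rewrite /gp vA uq pq.
    have := mx _ _ gq; rewrite Es count_cat (count0 hL) /= sxj (count0 hr).
    have := count_two sv sxj (eq_sym_neq vxj) lq => H1 H2.
    by move: H1; rewrite ltnNge H2.
- apply: (comp_case cA (memA _ (mem_head _ _))) IH' => v vC vx; apply/negP => sv.
  have vA : v \in A by case: (comp_sub vC) => [vx'|//]; rewrite vx' eqxx in vx.
  have gv : gp A v [::] by rewrite /gp vA.
  by have := mx _ _ gv; rewrite (count0 hs) /= sv.
Qed.

End Main.

Theorem mainTheorem16 (T : finType) (e : rel T) (S : {set T}) :
  symmetric e -> irreflexive e ->
  forest e ->
  (forall x, leaf e x -> x \in S) ->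
  (forall x, 2 <= #|gcomp e x|) ->
  exists F : {set T},
    #|S| <= 2 * #|F :&: S| /\
    (forall C : {set T}, is_component_of_induced e F C ->
       subdivided_star e C /\ quasi_clean e S C).
Proof.
move=> esym eirr efor lS c2.
have nbrT : forall x, #|nbr e setT x| = deg e x.
  by move=> x; apply: eq_card => y; rewrite !inE.
have cT : clean e S setT.
  move=> x _; rewrite nbrT; split; last by move=> d1; apply: lS; rewrite /leaf d1.
  rewrite lt0n; apply/negP => /eqP d0.
  have : #|gcomp e x| <= 1.
    rewrite -(cards1 x); apply: subset_leq_card; apply/subsetP => y.
    rewrite !inE => /connectP [[|z p] /= Hp ->] //.
    move: Hp => /andP [exz _].
    have : z \in [set y | e x y] by rewrite inE.
    by move: d0; rewrite /deg => /eqP; rewrite cards_eq0 => /eqP ->; rewrite inE.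
  by rewrite leqNgt (c2 x).
have [F1 [F2 [_ _ _ [v1 v2] cnt]]] := claim esym eirr efor (leqnn _) cT.
rewrite setTI in cnt.
case: (leqP #|F2 :&: S| #|F1 :&: S|) => h.
- exists F1; split; last exact: v1.
  move: cnt h; set a := #|F1 :&: S|; set b := #|F2 :&: S|; lia.
- exists F2; split; last exact: v2.
  move: cnt h; set a := #|F1 :&: S|; set b := #|F2 :&: S|; lia.
Qed.
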